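(* Let $A,B\in M_n(\mathbb{R}_+)$ and let $C=[A,B]_\oplus = AB\oplus BA$. Suppose $AC=0$ and $BC=0$. Then for every index $t\in\{1,\dots,n\}$: (a) if $a_{it}>0$ for some $i$ (i.e. the $t$-th column of $A$ is nonzero), then the $t$-th row of $C$ is identically $0$; (b) if $b_{it}>0$ for some $i$ (i.e. the $t$-th column of $B$ is nonzero), then the $t$-th row of $C$ is identically $0$.
   Context: Max algebra: $\mathbb{R}_+$ the nonnegative reals with $a\oplus b=\max\{a,b\}$ and ordinary multiplication; for $A,B\in M_n(\mathbb{R}_+)$, $(AB)_{ij}=\max_k a_{ik}b_{kj}$ and $(A\oplus B)_{ij}=\max\{a_{ij},b_{ij}\}$. *)

(* Defs.v *)
From mathcomp Require Import all_boot all_order all_algebra.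
Set Implicit Arguments. Unset Strict Implicit. Unset Printing Implicit Defensive.
Import Order.TTheory GRing.Theory Num.Theory.
Local Open Scope ring_scope.

Definition nonneg_mx (R : realFieldType) (n : nat) (A : 'M[R]_n) : Prop :=
  forall i j, 0 <= A i j.

(* max-algebra product: (A (x) B)_{ij} = max_k a_{ik} b_{kj} (0 is the
   neutral element of max on R_+) *)
Definition maxmul (R : realFieldType) (n : nat) (A B : 'M[R]_n) : 'M[R]_n :=
  \matrix_(i, j) \big[Num.max/0]_(k < n) (A i k * B k j).

Definition maxadd (R : realFieldType) (n : nat) (A B : 'M[R]_n) : 'M[R]_n :=
  \matrix_(i, j) Num.max (A i j) (B i j).

Definition maxcomm (R : realFieldType) (n : nat) (A B : 'M[R]_n) : 'M[R]_n :=
  maxadd (maxmul A B) (maxmul B A).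

(* Main.v *)
Require Import Defs.
From mathcomp Require Import all_boot all_order all_algebra.
Import Order.TTheory GRing.Theory Num.Theory.
Local Open Scope ring_scope.

Lemma bigmax_ge0 (R : realFieldType) (n : nat) (F : 'I_n -> R) :
  0 <= \big[Num.max/0]_(k < n) F k.
Proof.
rewrite unlock /reducebig.
elim: (index_enum 'I_n) => //= a s IH.
by rewrite le_max IH orbT.
Qed.

Lemma bigmax_ge (R : realFieldType) (n : nat) (F : 'I_n -> R) k :
  F k <= \big[Num.max/0]_(k < n) F k.
Proof.
rewrite unlock /reducebig.
have : k \in index_enum 'I_n by rewrite mem_index_enum.
elim: (index_enum 'I_n) => //= a s IH; rewrite inE => /orP [/eqP -> | /IH h].
  by rewrite le_max lexx.
by rewrite le_max h orbT.
Qed.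

Lemma maxcomm_ge0 (R : realFieldType) (n : nat) (A B : 'M[R]_n) i j :
  0 <= maxcomm A B i j.
Proof.
by rewrite /maxcomm /maxadd /maxmul !mxE le_max bigmax_ge0.
Qed.

Lemma key (R : realFieldType) (n : nat) (A C : 'M[R]_n)
  (hAC : maxmul A C = 0) (hC : forall i j, 0 <= C i j) t :
  (exists i, 0 < A i t) -> forall j, C t j = 0.
Proof.
move=> [i hi] j.
have h : A i t * C t j <= 0.
  have := congr1 (fun M : 'M[R]_n => M i j) hAC; rewrite /maxmul !mxE => <-.
  exact: (@bigmax_ge R n (fun k => A i k * C k j) t).
apply/eqP; rewrite eq_le hC andbT.
by rewrite pmulr_rle0 in h.
Qed.

Theorem lemma3p7 (R : realFieldType) (n : nat) (A B : 'M[R]_n)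
  (hA : nonneg_mx A) (hB : nonneg_mx B)
  (hAC : maxmul A (maxcomm A B) = 0)
  (hBC : maxmul B (maxcomm A B) = 0) :
  forall t : 'I_n,
    ((exists i, 0 < A i t) -> forall j, maxcomm A B t j = 0) /\
    ((exists i, 0 < B i t) -> forall j, maxcomm A B t j = 0).
Proof.
move=> t; split; apply: key => //; exact: maxcomm_ge0.
Qed.
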